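(* Let $\mathfrak{F}$ be an anchor ring (torus of revolution) in $\mathbb{E}^3$, i.e. the tube $\boldsymbol{x}(u,\phi)=\boldsymbol{a}(u)+r\cos\phi\,\boldsymbol{h}(u)+r\sin\phi\,\boldsymbol{b}(u)$ about a plane circle $\boldsymbol{a}$ of constant curvature $\kappa>0$ (torsion $\tau=0$), with $0<r<1/\kappa$. Let $W$ be any open portion of $\mathfrak{F}$ on which $\cos\phi\neq 0$ (equivalently, the Gauss curvature $K\neq 0$). Then there is no constant real $3\times 3$ matrix $A$ such that the Gauss map $\boldsymbol{N}$ of $\mathfrak{F}$ satisfies $\Delta^{II}\boldsymbol{N}=A\boldsymbol{N}$ on $W$; that is, the anchor ring is of coordinate infinite type Gauss map with respect to the second fundamental form. *)

(* Defs.v *)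
From Stdlib Require Import Reals.
From Coquelicot Require Import Coquelicot.
Open Scope R_scope.

Record V3 := mkV { c1 : R; c2 : R; c3 : R }.

Definition vadd (a b : V3) : V3 := mkV (c1 a + c1 b) (c2 a + c2 b) (c3 a + c3 b).
Definition vscale (k : R) (a : V3) : V3 := mkV (k * c1 a) (k * c2 a) (k * c3 a).
Definition vdot (a b : V3) : R := c1 a * c1 b + c2 a * c2 b + c3 a * c3 b.
Definition vcross (a b : V3) : V3 :=
  mkV (c2 a * c3 b - c3 a * c2 b) (c3 a * c1 b - c1 a * c3 b) (c1 a * c2 b - c2 a * c1 b).
Definition vnorm (a : V3) : R := sqrt (vdot a a).

Record M3 := mkM { row1 : V3; row2 : V3; row3 : V3 }.
Definition matvec (A : M3) (v : V3) : V3 :=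
  mkV (vdot (row1 A) v) (vdot (row2 A) v) (vdot (row3 A) v).

Definition pu (f : R -> R -> R) (u v : R) : R := Derive (fun s => f s v) u.
Definition pv (f : R -> R -> R) (u v : R) : R := Derive (fun t => f u t) v.
Definition dU (X : R -> R -> V3) (u v : R) : V3 :=
  mkV (pu (fun s t => c1 (X s t)) u v) (pu (fun s t => c2 (X s t)) u v)
      (pu (fun s t => c3 (X s t)) u v).
Definition dV (X : R -> R -> V3) (u v : R) : V3 :=
  mkV (pv (fun s t => c1 (X s t)) u v) (pv (fun s t => c2 (X s t)) u v)
      (pv (fun s t => c3 (X s t)) u v).

Definition gauss_map (X : R -> R -> V3) (u v : R) : V3 :=
  let n := vcross (dU X u v) (dV X u v) in vscale (/ vnorm n) n.

Definition IIL (X : R -> R -> V3) (u v : R) : R := vdot (dU (dU X) u v) (gauss_map X u v).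
Definition IIM (X : R -> R -> V3) (u v : R) : R := vdot (dV (dU X) u v) (gauss_map X u v).
Definition IIN (X : R -> R -> V3) (u v : R) : R := vdot (dV (dV X) u v) (gauss_map X u v).
Definition IIdet (X : R -> R -> V3) (u v : R) : R :=
  IIL X u v * IIN X u v - IIM X u v * IIM X u v.

(* Laplace operator of the (non-degenerate) second fundamental form:
   Delta^II f = - 1/sqrt|h| * sum_{ij} d_i ( sqrt|h| h^{ij} d_j f ),
   h = II, h^{ij} its inverse matrix. *)
Definition lapII (X : R -> R -> V3) (f : R -> R -> R) (u v : R) : R :=
  let w := fun s t => sqrt (Rabs (IIdet X s t)) in
  let h11 := fun s t => IIN X s t / IIdet X s t in
  let h12 := fun s t => - IIM X s t / IIdet X s t in
  let h22 := fun s t => IIL X s t / IIdet X s t in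
  - / w u v *
    ( pu (fun s t => w s t * (h11 s t * pu f s t + h12 s t * pv f s t)) u v
    + pv (fun s t => w s t * (h12 s t * pu f s t + h22 s t * pv f s t)) u v ).

Definition lapII_vec (X : R -> R -> V3) (F : R -> R -> V3) (u v : R) : V3 :=
  mkV (lapII X (fun s t => c1 (F s t)) u v) (lapII X (fun s t => c2 (F s t)) u v)
      (lapII X (fun s t => c3 (F s t)) u v).

(* The anchor ring: tube of radius r about the plane circle a of curvature kappa
   (arc-length parametrized), with center c, in the plane spanned by the
   orthonormal vectors e1, e2:
     a(u) = c + (1/kappa)(cos(kappa u) e1 + sin(kappa u) e2),
     h(u) = -(cos(kappa u) e1 + sin(kappa u) e2)   (principal normal),
     b    = e1 x e2                                 (binormal, tau = 0),
     x(u,phi) = a(u) + r cos phi h(u) + r sin phi b. *)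
Definition circ_a (kappa : R) (c e1 e2 : V3) (u : R) : V3 :=
  vadd c (vscale (/ kappa) (vadd (vscale (cos (kappa * u)) e1) (vscale (sin (kappa * u)) e2))).
Definition circ_h (kappa : R) (e1 e2 : V3) (u : R) : V3 :=
  vscale (-1) (vadd (vscale (cos (kappa * u)) e1) (vscale (sin (kappa * u)) e2)).
Definition circ_b (e1 e2 : V3) : V3 := vcross e1 e2.

Definition anchor_ring (kappa r : R) (c e1 e2 : V3) (u phi : R) : V3 :=
  vadd (circ_a kappa c e1 e2 u)
       (vadd (vscale (r * cos phi) (circ_h kappa e1 e2 u))
             (vscale (r * sin phi) (circ_b e1 e2))).

Definition open2 (W : R -> R -> Prop) : Prop :=
  forall u v, W u v -> exists e, 0 < e /\
    forall u' v', Rabs (u' - u) < e -> Rabs (v' - v) < e -> W u' v'.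

(* Main.v *)
Require Import Defs.
From Stdlib Require Import Reals Lra FunctionalExtensionality.
From Coquelicot Require Import Coquelicot.
Open Scope R_scope.
Require Import Defs.
Lemma is_derive_lin (f g h : R -> R) x f' g' h' d a b c :
  is_derive f x f' -> is_derive g x g' -> is_derive h x h' ->
  is_derive (fun y => d + (f y * a + g y * b + h y * c)) x (0 + (f'*a + g'*b + h'*c)).
Proof.
  intros Hf Hg Hh.
  apply (is_derive_plus (fun _ => d) (fun y => f y * a + g y * b + h y * c) x 0 (f'*a + g'*b + h'*c)).
  - exact (@is_derive_const R_AbsRing R_NormedModule d x).
  - apply (is_derive_plus (fun y => f y * a + g y * b) (fun y => h y * c)).
    + apply (is_derive_plus (fun y => f y * a) (fun y => g y * b)).
      * exact (is_derive_scal_l f x f' a Hf).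
      * exact (is_derive_scal_l g x g' b Hg).
    + exact (is_derive_scal_l h x h' c Hh).
Qed.
Lemma V3_ext (v w : V3) : c1 v = c1 w -> c2 v = c2 w -> c3 v = c3 w -> v = w.
Proof. destruct v, w; simpl; intros; subst; reflexivity. Qed.

Lemma sc1 x : sin x * sin x + cos x * cos x = 1.
Proof. generalize (sin2_cos2 x). unfold Rsqr. auto. Qed.

Definition zeroV := mkV 0 0 0.
Definition combc (e1 e2 c : V3) (x y z : R) : V3 :=
  mkV (c1 c + (x * c1 e1 + y * c1 e2 + z * c1 (vcross e1 e2)))
      (c2 c + (x * c2 e1 + y * c2 e2 + z * c2 (vcross e1 e2)))
      (c3 c + (x * c3 e1 + y * c3 e2 + z * c3 (vcross e1 e2))).

Lemma combc_ext e1 e2 c x y z x' y' z' : x = x' -> y = y' -> z = z' ->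
  combc e1 e2 c x y z = combc e1 e2 c x' y' z'.
Proof. intros; subst; reflexivity. Qed.

Lemma dU_comb e1 e2 c (al be ga al' be' ga' : R -> R -> R) :
  (forall s t, is_derive (fun x => al x t) s (al' s t)) ->
  (forall s t, is_derive (fun x => be x t) s (be' s t)) ->
  (forall s t, is_derive (fun x => ga x t) s (ga' s t)) ->
  dU (fun s t => combc e1 e2 c (al s t) (be s t) (ga s t)) =
  fun s t => combc e1 e2 zeroV (al' s t) (be' s t) (ga' s t).
Proof.
  intros Ha Hb Hg. apply functional_extensionality; intro s.
  apply functional_extensionality; intro t.
  unfold dU, pu, combc; simpl. f_equal; apply is_derive_unique;
  apply (is_derive_lin (fun x => al x t) (fun x => be x t) (fun x => ga x t)); auto.
Qed.

Lemma dV_comb e1 e2 c (al be ga al' be' ga' : R -> R -> R) :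
  (forall s t, is_derive (fun x => al s x) t (al' s t)) ->
  (forall s t, is_derive (fun x => be s x) t (be' s t)) ->
  (forall s t, is_derive (fun x => ga s x) t (ga' s t)) ->
  dV (fun s t => combc e1 e2 c (al s t) (be s t) (ga s t)) =
  fun s t => combc e1 e2 zeroV (al' s t) (be' s t) (ga' s t).
Proof.
  intros Ha Hb Hg. apply functional_extensionality; intro s.
  apply functional_extensionality; intro t.
  unfold dV, pv, combc; simpl. f_equal; apply is_derive_unique;
  apply (is_derive_lin (fun x => al s x) (fun x => be s x) (fun x => ga s x)); auto.
Qed.

Lemma dot_comb e1 e2 x y z x' y' z' :
  vdot e1 e1 = 1 -> vdot e2 e2 = 1 -> vdot e1 e2 = 0 ->
  vdot (combc e1 e2 zeroV x y z) (combc e1 e2 zeroV x' y' z') = x*x' + y*y' + z*z'.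
Proof.
  intros H11 H22 H12.
  assert (E : vdot (combc e1 e2 zeroV x y z) (combc e1 e2 zeroV x' y' z') =
     x*x' + y*y' + z*z' + x*x'*(vdot e1 e1 - 1) + y*y'*(vdot e2 e2 - 1)
     + (x*y' + y*x') * vdot e1 e2
     + z*z' * (vdot e1 e1 * vdot e2 e2 - vdot e1 e2 * vdot e1 e2 - 1)).
  { unfold vdot, combc, zeroV, vcross; simpl; ring. }
  rewrite E, H11, H22, H12; unfold combc, zeroV; simpl; ring.
Qed.

Lemma cross_comb e1 e2 x y z x' y' z' :
  vdot e1 e1 = 1 -> vdot e2 e2 = 1 -> vdot e1 e2 = 0 ->
  vcross (combc e1 e2 zeroV x y z) (combc e1 e2 zeroV x' y' z') =
  combc e1 e2 zeroV (y*z' - z*y') (z*x' - x*z') (x*y' - y*x').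
Proof.
  intros H11 H22 H12.
  apply V3_ext.
  - assert (E : c1 (vcross (combc e1 e2 zeroV x y z) (combc e1 e2 zeroV x' y' z')) =
      c1 zeroV + ((y*z' - z*y') * c1 e1 + (z*x' - x*z') * c1 e2 + (x*y' - y*x') * c1 (vcross e1 e2))
      + (x*z' - z*x') * (c1 e1 * vdot e1 e2 - c1 e2 * (vdot e1 e1 - 1))
      + (y*z' - z*y') * (c1 e1 * (vdot e2 e2 - 1) - c1 e2 * vdot e1 e2)).
    { unfold vdot, combc, zeroV, vcross; simpl; ring. }
    rewrite E, H11, H22, H12; unfold combc, zeroV; simpl; ring.
  - assert (E : c2 (vcross (combc e1 e2 zeroV x y z) (combc e1 e2 zeroV x' y' z')) =
      c2 zeroV + ((y*z' - z*y') * c2 e1 + (z*x' - x*z') * c2 e2 + (x*y' - y*x') * c2 (vcross e1 e2))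
      + (x*z' - z*x') * (c2 e1 * vdot e1 e2 - c2 e2 * (vdot e1 e1 - 1))
      + (y*z' - z*y') * (c2 e1 * (vdot e2 e2 - 1) - c2 e2 * vdot e1 e2)).
    { unfold vdot, combc, zeroV, vcross; simpl; ring. }
    rewrite E, H11, H22, H12; unfold combc, zeroV; simpl; ring.
  - assert (E : c3 (vcross (combc e1 e2 zeroV x y z) (combc e1 e2 zeroV x' y' z')) =
      c3 zeroV + ((y*z' - z*y') * c3 e1 + (z*x' - x*z') * c3 e2 + (x*y' - y*x') * c3 (vcross e1 e2))
      + (x*z' - z*x') * (c3 e1 * vdot e1 e2 - c3 e2 * (vdot e1 e1 - 1))
      + (y*z' - z*y') * (c3 e1 * (vdot e2 e2 - 1) - c3 e2 * vdot e1 e2)).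
    { unfold vdot, combc, zeroV, vcross; simpl; ring. }
    rewrite E, H11, H22, H12; unfold combc, zeroV; simpl; ring.
Qed.
Lemma X_eq k r c e1 e2 : anchor_ring k r c e1 e2 =
  fun u t => combc e1 e2 c ((/k - r * cos t) * cos (k*u)) ((/k - r * cos t) * sin (k*u)) (r * sin t).
Proof.
  apply functional_extensionality; intro u; apply functional_extensionality; intro t.
  unfold anchor_ring, circ_a, circ_h, circ_b, combc, vadd, vscale; simpl. f_equal; ring.
Qed.

Lemma dUX k r c e1 e2 : dU (anchor_ring k r c e1 e2) =
  fun u t => combc e1 e2 zeroV (-((/k - r * cos t) * (k * sin (k*u)))) ((/k - r * cos t) * (k * cos (k*u))) 0.
Proof.
  rewrite X_eq. apply dU_comb; intros; auto_derive; auto; ring.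
Qed.

Lemma dVX k r c e1 e2 : dV (anchor_ring k r c e1 e2) =
  fun u t => combc e1 e2 zeroV (r * sin t * cos (k*u)) (r * sin t * sin (k*u)) (r * cos t).
Proof.
  rewrite X_eq. apply dV_comb; intros; auto_derive; auto; ring.
Qed.

Lemma dUUX k r c e1 e2 : dU (dU (anchor_ring k r c e1 e2)) =
  fun u t => combc e1 e2 zeroV (-((/k - r * cos t) * (k * (k * cos (k*u))))) (-((/k - r * cos t) * (k * (k * sin (k*u))))) 0.
Proof.
  rewrite dUX. apply dU_comb; intros; auto_derive; auto; ring.
Qed.

Lemma dVUX k r c e1 e2 : dV (dU (anchor_ring k r c e1 e2)) =
  fun u t => combc e1 e2 zeroV (-(r * sin t * (k * sin (k*u)))) (r * sin t * (k * cos (k*u))) 0.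
Proof.
  rewrite dUX. apply dV_comb; intros; auto_derive; auto; ring.
Qed.

Lemma dVVX k r c e1 e2 : dV (dV (anchor_ring k r c e1 e2)) =
  fun u t => combc e1 e2 zeroV (r * cos t * cos (k*u)) (r * cos t * sin (k*u)) (- (r * sin t)).
Proof.
  rewrite dVX. apply dV_comb; intros; auto_derive; auto; ring.
Qed.

Lemma rho_pos k r t : 0 < k -> 0 < r -> r < / k -> 0 < / k - r * cos t.
Proof.
  intros. assert (H2 := COS_bound t). 
  assert (r * cos t <= r) by nra. lra.
Qed.

Lemma gauss_eq k r c e1 e2 : 0 < k -> 0 < r -> r < / k ->
  vdot e1 e1 = 1 -> vdot e2 e2 = 1 -> vdot e1 e2 = 0 ->
  gauss_map (anchor_ring k r c e1 e2) =
  fun u t => combc e1 e2 zeroV (cos t * cos (k*u)) (cos t * sin (k*u)) (- sin t).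
Proof.
  intros Hk Hr Hrk H11 H22 H12.
  apply functional_extensionality; intro u; apply functional_extensionality; intro t.
  unfold gauss_map. rewrite dUX, dVX, cross_comb by auto.
  set (N := (/k - r * cos t) * k * r).
  assert (HN : 0 < N) by (unfold N; generalize (rho_pos k r t Hk Hr Hrk); intro; 
     apply Rmult_lt_0_compat; auto; apply Rmult_lt_0_compat; auto).
  rewrite (combc_ext e1 e2 zeroV _ _ _ (N * (cos t * cos (k*u))) (N * (cos t * sin (k*u))) (N * (- sin t))).
  2: unfold N; ring. 2: unfold N; ring.
  2: { transitivity (N * (- sin t) * (sin (k*u) * sin (k*u) + cos (k*u) * cos (k*u))).
       unfold N; ring. rewrite sc1; ring. }
  unfold vnorm. rewrite dot_comb by auto.
  replace (N * (cos t * cos (k * u)) * (N * (cos t * cos (k * u))) +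
    N * (cos t * sin (k * u)) * (N * (cos t * sin (k * u))) + N * - sin t * (N * - sin t)) with (Rsqr N).
  2: { transitivity (Rsqr N * (cos t * cos t * (sin (k*u) * sin (k*u) + cos (k*u) * cos (k*u)) + sin t * sin t)).
       2: unfold Rsqr; ring. rewrite sc1, Rmult_1_r, Rplus_comm, sc1. unfold Rsqr; ring. }
  rewrite sqrt_Rsqr by lra.
  unfold vscale, combc, zeroV; simpl. f_equal; field; lra.
Qed.
Lemma IIL_eq k r c e1 e2 : 0 < k -> 0 < r -> r < / k ->
  vdot e1 e1 = 1 -> vdot e2 e2 = 1 -> vdot e1 e2 = 0 ->
  IIL (anchor_ring k r c e1 e2) = fun u t => - ((/k - r * cos t) * (k * k)) * cos t.
Proof.
  intros. apply functional_extensionality; intro u; apply functional_extensionality; intro t.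
  unfold IIL. rewrite dUUX, gauss_eq, dot_comb by auto.
  transitivity (- ((/k - r * cos t) * (k * k)) * cos t * (sin (k*u) * sin (k*u) + cos (k*u) * cos (k*u))).
  ring. rewrite sc1; ring.
Qed.

Lemma IIM_eq k r c e1 e2 : 0 < k -> 0 < r -> r < / k ->
  vdot e1 e1 = 1 -> vdot e2 e2 = 1 -> vdot e1 e2 = 0 ->
  IIM (anchor_ring k r c e1 e2) = fun u t => 0.
Proof.
  intros. apply functional_extensionality; intro u; apply functional_extensionality; intro t.
  unfold IIM. rewrite dVUX, gauss_eq, dot_comb by auto. ring.
Qed.

Lemma IIN_eq k r c e1 e2 : 0 < k -> 0 < r -> r < / k ->
  vdot e1 e1 = 1 -> vdot e2 e2 = 1 -> vdot e1 e2 = 0 ->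
  IIN (anchor_ring k r c e1 e2) = fun u t => r.
Proof.
  intros. apply functional_extensionality; intro u; apply functional_extensionality; intro t.
  unfold IIN. rewrite dVVX, gauss_eq, dot_comb by auto.
  transitivity (r * (cos t * cos t * (sin (k*u) * sin (k*u) + cos (k*u) * cos (k*u)) + sin t * sin t)).
  ring. rewrite sc1, Rmult_1_r, Rplus_comm, sc1; ring.
Qed.

Lemma IIdet_eq k r c e1 e2 : 0 < k -> 0 < r -> r < / k ->
  vdot e1 e1 = 1 -> vdot e2 e2 = 1 -> vdot e1 e2 = 0 ->
  IIdet (anchor_ring k r c e1 e2) = fun u t => - ((/k - r * cos t) * (k * k)) * cos t * r.
Proof.
  intros. apply functional_extensionality; intro u; apply functional_extensionality; intro t.
  unfold IIdet. rewrite IIL_eq, IIM_eq, IIN_eq by auto. ring.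
Qed.
Lemma loc_pos (sg v : R) : 0 < sg * cos v -> locally v (fun t => 0 < sg * cos t).
Proof.
  intro H.
  assert (Hc : continuous (fun t => sg * cos t) v).
  { apply (@ex_derive_continuous R_AbsRing R_NormedModule). auto_derive. auto. }
  assert (H2 : locally (sg * cos v) (fun y => 0 < y)).
  { exists (mkposreal _ H). intros y Hy.
    change (Rabs (y - sg * cos v) < sg * cos v) in Hy.
    apply Rabs_def2 in Hy. simpl in Hy. lra. }
  exact (Hc _ H2).
Qed.
Lemma absD k r sg t : 0 < k -> 0 < r -> r < / k -> (sg = 1 \/ sg = -1) -> 0 < sg * cos t ->
  Rabs (- ((/ k - r * cos t) * (k * k)) * cos t * r) = k*k*r*((/k - r*cos t)*(sg*cos t)).
Proof.
  intros Hk Hr Hrk Hsg Hc.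
  assert (Hp := rho_pos k r t Hk Hr Hrk).
  replace (- ((/ k - r * cos t) * (k * k)) * cos t * r) with ((- sg) * (k*k*r*((/k - r*cos t)*(sg*cos t)))).
  2: { destruct Hsg; subst; ring. }
  rewrite Rabs_mult, (Rabs_pos_eq (k*k*r*_)).
  2: { apply Rmult_le_pos; [ | nra]. apply Rmult_le_pos; nra. }
  assert (Ha : Rabs (- sg) = 1) by (destruct Hsg; subst; unfold Rabs; destruct Rcase_abs; lra).
  rewrite Ha; ring.
Qed.

Lemma lap_eq k r c e1 e2 (a b0 d u v sg : R) : 0 < k -> 0 < r -> r < / k ->
  vdot e1 e1 = 1 -> vdot e2 e2 = 1 -> vdot e1 e2 = 0 ->
  (sg = 1 \/ sg = -1) -> 0 < sg * cos v ->
  lapII (anchor_ring k r c e1 e2)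
    (fun s t => 0 + (cos t * cos (k*s) * a + cos t * sin (k*s) * b0 + - sin t * d)) u v
  = (- / (/k - r * cos v) + (cos v + sin v * sin v * (2 * r * cos v - / k) / (2 * (/k - r * cos v) * cos v)) / r)
      * (cos (k*u) * a + sin (k*u) * b0)
    + sin v * (4 * r * cos v - 3 * / k) / (2 * r * (/k - r * cos v)) * d.
Proof.
  intros Hk Hr Hrk H11 H22 H12 Hsg Hc.
  assert (PU : pu (fun s t => 0 + (cos t * cos (k*s) * a + cos t * sin (k*s) * b0 + - sin t * d)) =
     fun s t => cos t * (- (k * sin (k*s))) * a + cos t * (k * cos (k*s)) * b0).
  { apply functional_extensionality; intro s; apply functional_extensionality; intro t.
    unfold pu; apply is_derive_unique; auto_derive; auto; ring. }
  assert (PV : pv (fun s t => 0 + (cos t * cos (k*s) * a + cos t * sin (k*s) * b0 + - sin t * d)) =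
     fun s t => - sin t * cos (k*s) * a - sin t * sin (k*s) * b0 - cos t * d).
  { apply functional_extensionality; intro s; apply functional_extensionality; intro t.
    unfold pv; apply is_derive_unique; auto_derive; auto; ring. }
  unfold lapII. rewrite PU, PV, IIdet_eq, IIL_eq, IIM_eq, IIN_eq by auto.
  cbv beta zeta. unfold pu, pv.
  assert (Hp := rho_pos k r v Hk Hr Hrk).
  assert (Hcv : cos v <> 0) by (intro E; rewrite E in Hc; lra).
  assert (Hk0 : k <> 0) by lra.
  assert (Hne : 1 - r * cos v * k <> 0).
  { assert (Ek : 1 - r * cos v * k = k * (/k - r * cos v)) by (field; lra).
    rewrite Ek. apply Rgt_not_eq, Rmult_lt_0_compat; lra. }
  assert (Hsg0 : sg <> 0) by (destruct Hsg; lra).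
  set (Dv := - ((/ k - r * cos v) * (k * k)) * cos v * r).
  assert (HD : Dv <> 0).
  { unfold Dv. intro E. assert (E2 : (/ k - r * cos v) * (k * k) * cos v * r = 0) by lra.
    repeat (apply Rmult_integral in E2; destruct E2 as [E2|E2]); nra. }
  match goal with |- context [Derive ?f u] =>
    assert (HU : is_derive f u (sqrt (Rabs Dv) * (r / Dv *
       (cos v * -(k*(k*cos(k*u))) * a + cos v * (-(k*(k*sin(k*u)))) * b0))))
  end.
  { auto_derive; auto. unfold Dv. unfold Rdiv. ring_simplify. reflexivity. }
  rewrite (is_derive_unique _ _ _ HU).
  set (Q := fun t => k*k*r*((/k - r*cos t)*(sg*cos t))).
  set (P := fun t => /r * (- sin t * cos (k*u) * a - sin t * sin (k*u) * b0 - cos t * d)).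
  set (P' := /r * (- cos v * cos (k*u) * a - cos v * sin (k*u) * b0 + sin v * d)).
  set (Q' := k*k*r*(r*sin v*(sg*cos v) + (/k - r * cos v)*(sg*(- sin v)))).
  assert (HQ : 0 < Q v).
  { unfold Q. apply Rmult_lt_0_compat; [ | nra]. apply Rmult_lt_0_compat; nra. }
  set (S := sqrt (Q v)).
  assert (HS : 0 < S) by (apply sqrt_lt_R0; auto).
  assert (HSS : S * S = Q v) by (apply sqrt_sqrt; lra).
  match goal with |- context [Derive ?g v] =>
    assert (HV : is_derive g v (Q' / (2 * S) * P v + S * P'))
  end.
  { apply (is_derive_ext_loc (fun t => sqrt (Q t) * P t)).
    - eapply filter_imp; [ | apply (loc_pos sg v Hc)].
      intros t Ht. simpl in Ht |- *. rewrite (absD k r sg t) by auto.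
      fold (Q t).
      assert (Hct : cos t <> 0) by (intro E; rewrite E in Ht; lra).
      assert (Hpt := rho_pos k r t Hk Hr Hrk).
      assert (Ek : 1 - r * cos t * k = k * (/k - r * cos t)) by (field; lra).
      unfold P. field. rewrite Ek. repeat split; auto; try lra.
      apply Rgt_not_eq, Rmult_lt_0_compat; lra.
    - unfold Q, P, Q', P'. auto_derive.
      + exact HQ.
      + change (sqrt (k * k * r * ((/ k + - (r * cos v)) * (sg * cos v)))) with S.
        match goal with |- ?x = ?y => change (@eq R x y) end.
        field. split; lra. }
  rewrite (is_derive_unique _ _ _ HV).
  unfold Dv; rewrite (absD k r sg v) by auto. fold (Q v). fold S.
  match goal with |- - / S * (S * ?A + (Q' / (2 * S) * P v + S * P')) = _ =>
    transitivity (- (A + Q' * P v / (2 * (S * S)) + P')) end.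
  { field. repeat split; auto; lra. }
  rewrite HSS. unfold Q, P, P', Q'.
  assert (Ek : 1 - r * cos v * k = k * (/k - r * cos v)) by (field; lra).
  field. repeat split; auto; lra.
Qed.
Definition gfun k r v := sin v * (4 * r * cos v - 3 * / k) / (2 * r * (/k - r * cos v)).

Definition trb (A : M3) (b : V3) : V3 :=
  mkV (c1 b * c1 (row1 A) + c2 b * c1 (row2 A) + c3 b * c1 (row3 A))
      (c1 b * c2 (row1 A) + c2 b * c2 (row2 A) + c3 b * c2 (row3 A))
      (c1 b * c3 (row1 A) + c2 b * c3 (row2 A) + c3 b * c3 (row3 A)).

Lemma point_eq k r c e1 e2 (A : M3) u v : 0 < k -> 0 < r -> r < / k ->
  vdot e1 e1 = 1 -> vdot e2 e2 = 1 -> vdot e1 e2 = 0 -> cos v <> 0 ->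
  lapII_vec (anchor_ring k r c e1 e2) (gauss_map (anchor_ring k r c e1 e2)) u v
    = matvec A (gauss_map (anchor_ring k r c e1 e2) u v) ->
  gfun k r v = cos v * cos (k*u) * vdot (trb A (vcross e1 e2)) e1
     + cos v * sin (k*u) * vdot (trb A (vcross e1 e2)) e2
     - sin v * vdot (trb A (vcross e1 e2)) (vcross e1 e2).
Proof.
  intros Hk Hr Hrk H11 H22 H12 Hc Heq.
  assert (Hsg : exists sg, (sg = 1 \/ sg = -1) /\ 0 < sg * cos v).
  { destruct (Rlt_dec 0 (cos v)).
    - exists 1; split; [left; auto | lra].
    - exists (-1); split; [right; auto | ]. assert (cos v < 0) by lra. lra. }
  destruct Hsg as [sg [Hsg Hsc]].
  apply (f_equal (vdot (vcross e1 e2))) in Heq.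
  rewrite gauss_eq in Heq by auto.
  set (b := vcross e1 e2) in *.
  set (F := (- / (/k - r * cos v) + (cos v + sin v * sin v * (2 * r * cos v - / k) / (2 * (/k - r * cos v) * cos v)) / r)) in *.
  unfold lapII_vec in Heq.
  assert (L1 : lapII (anchor_ring k r c e1 e2) (fun s t => c1 (combc e1 e2 zeroV (cos t * cos (k*s)) (cos t * sin (k*s)) (- sin t))) u v
     = F * (cos (k*u) * c1 e1 + sin (k*u) * c1 e2) + gfun k r v * c1 b)
     by exact (lap_eq k r c e1 e2 (c1 e1) (c1 e2) (c1 b) u v sg Hk Hr Hrk H11 H22 H12 Hsg Hsc).
  assert (L2 : lapII (anchor_ring k r c e1 e2) (fun s t => c2 (combc e1 e2 zeroV (cos t * cos (k*s)) (cos t * sin (k*s)) (- sin t))) u v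
     = F * (cos (k*u) * c2 e1 + sin (k*u) * c2 e2) + gfun k r v * c2 b)
     by exact (lap_eq k r c e1 e2 (c2 e1) (c2 e2) (c2 b) u v sg Hk Hr Hrk H11 H22 H12 Hsg Hsc).
  assert (L3 : lapII (anchor_ring k r c e1 e2) (fun s t => c3 (combc e1 e2 zeroV (cos t * cos (k*s)) (cos t * sin (k*s)) (- sin t))) u v
     = F * (cos (k*u) * c3 e1 + sin (k*u) * c3 e2) + gfun k r v * c3 b)
     by exact (lap_eq k r c e1 e2 (c3 e1) (c3 e2) (c3 b) u v sg Hk Hr Hrk H11 H22 H12 Hsg Hsc).
  rewrite L1, L2, L3 in Heq.
  assert (E1 : vdot b (mkV (F * (cos (k*u) * c1 e1 + sin (k*u) * c1 e2) + gfun k r v * c1 b)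
     (F * (cos (k*u) * c2 e1 + sin (k*u) * c2 e2) + gfun k r v * c2 b)
     (F * (cos (k*u) * c3 e1 + sin (k*u) * c3 e2) + gfun k r v * c3 b))
     = gfun k r v * (vdot e1 e1 * vdot e2 e2 - vdot e1 e2 * vdot e1 e2)).
  { unfold b, vdot, vcross; simpl; ring. }
  rewrite E1, H11, H22, H12 in Heq.
  assert (E2 : vdot b (matvec A (combc e1 e2 zeroV (cos v * cos (k * u)) (cos v * sin (k * u)) (- sin v)))
     = cos v * cos (k*u) * vdot (trb A b) e1 + cos v * sin (k*u) * vdot (trb A b) e2
       - sin v * vdot (trb A b) b).
  { unfold b, matvec, trb, vdot, combc, zeroV, vcross; simpl; ring. }
  rewrite E2 in Heq. rewrite <- Heq. ring.
Qed.
Lemma three_u (h X Y a d : R) : cos d <> 1 ->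
  h = X * cos a + Y * sin a -> h = X * cos (a + d) + Y * sin (a + d) ->
  h = X * cos (a - d) + Y * sin (a - d) -> h = 0.
Proof.
  intros Hd E1 E2 E3.
  rewrite cos_plus, sin_plus in E2. rewrite cos_minus, sin_minus in E3.
  assert (E : h * (1 - cos d) * 2 =
    (h - (X * (cos a * cos d - sin a * sin d) + Y * (sin a * cos d + cos a * sin d)))
    + (h - (X * (cos a * cos d + sin a * sin d) + Y * (sin a * cos d - cos a * sin d)))
    - 2 * cos d * (h - (X * cos a + Y * sin a))) by ring.
  rewrite <- E1, <- E2, <- E3 in E.
  assert (h * (1 - cos d) = 0) by lra.
  apply Rmult_integral in H. destruct H; auto. exfalso; apply Hd; lra.
Qed.

Lemma ratio_contra r K C1 C2 : 0 < r -> 0 < K -> C1 <> C2 ->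
  K - r * C1 <> 0 -> K - r * C2 <> 0 ->
  (4 * r * C1 - 3 * K) / (2 * r * (K - r * C1)) = (4 * r * C2 - 3 * K) / (2 * r * (K - r * C2)) -> False.
Proof.
  intros Hr HK HC H1 H2 E.
  assert (E' : (4 * r * C1 - 3 * K) * (K - r * C2) = (4 * r * C2 - 3 * K) * (K - r * C1)).
  { apply (f_equal (fun x => x * (2 * r * (K - r * C1)) * (K - r * C2))) in E.
    field_simplify in E; [ | split; lra | split; lra]. lra. }
  assert (r * K * (C1 - C2) = 0) by lra.
  apply Rmult_integral in H. destruct H as [H|H]. nra. apply HC; lra.
Qed.
Theorem corollary1 (kappa r : R) (c e1 e2 : V3) (W : R -> R -> Prop) :
  0 < kappa -> 0 < r -> r < / kappa ->
  vdot e1 e1 = 1 -> vdot e2 e2 = 1 -> vdot e1 e2 = 0 ->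
  open2 W -> (exists u phi, W u phi) ->
  (forall u phi, W u phi -> cos phi <> 0) ->
  ~ (exists A : M3, forall u phi, W u phi ->
       lapII_vec (anchor_ring kappa r c e1 e2) (gauss_map (anchor_ring kappa r c e1 e2)) u phi
       = matvec A (gauss_map (anchor_ring kappa r c e1 e2) u phi)).
Proof.
  intros Hk Hr Hrk H11 H22 H12 HW [u0 [p0 Hw0]] Hcos [A HA].
  set (k := kappa) in *.
  set (p := vdot (trb A (vcross e1 e2)) e1).
  set (q := vdot (trb A (vcross e1 e2)) e2).
  set (sg := vdot (trb A (vcross e1 e2)) (vcross e1 e2)).
  assert (Key : forall u v, W u v ->
     gfun k r v = cos v * cos (k*u) * p + cos v * sin (k*u) * q - sin v * sg).
  { intros u v Hw. exact (point_eq k r c e1 e2 A u v Hk Hr Hrk H11 H22 H12 (Hcos u v Hw) (HA u v Hw)). }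
  assert (HPI := PI2_1).
  assert (Hb : exists pb, W u0 pb /\ sin pb <> 0).
  { destruct (Req_dec (sin p0) 0) as [Hs|Hs]; [| exists p0; auto].
    destruct (HW u0 p0 Hw0) as [e [He He2]].
    set (eta := Rmin (e/2) 1).
    assert (E1 : 0 < eta) by (apply Rmin_glb_lt; lra).
    assert (E2 : eta <= e/2) by apply Rmin_l.
    assert (E3 : eta <= 1) by apply Rmin_r.
    exists (p0 + eta). split.
    - apply He2.
      + replace (u0 - u0) with 0 by ring. rewrite Rabs_R0; lra.
      + replace (p0 + eta - p0) with eta by ring. rewrite Rabs_pos_eq; lra.
    - rewrite sin_plus, Hs.
      assert (0 < sin eta) by (apply sin_gt_0; lra).
      assert (Hc0 := Hcos u0 p0 Hw0).
      intro E. assert (cos p0 * sin eta = 0) by lra.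
      apply Rmult_integral in H0. destruct H0; [auto | lra]. }
  destruct Hb as [pb [Hwb Hsb]].
  destruct (HW u0 pb Hwb) as [e [He He2]].
  assert (Hcb := Hcos u0 pb Hwb).
  set (eta0 := Rmin (e/2) 1).
  assert (E1 : 0 < eta0) by (apply Rmin_glb_lt; lra).
  assert (E2 : eta0 <= e/2) by apply Rmin_l.
  assert (E3 : eta0 <= 1) by apply Rmin_r.
  assert (Hs0 : 0 < sin eta0) by (apply sin_gt_0; lra).
  assert (Hc0 : 0 < cos eta0) by (apply cos_gt_0; lra).
  assert (Heta : exists eta, Rabs eta < e /\ 0 < cos eta /\ 0 < cos pb * sin pb * sin eta).
  { destruct (Rlt_dec 0 (cos pb * sin pb)).
    - exists eta0. rewrite Rabs_pos_eq by lra. repeat split; try lra.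
      apply Rmult_lt_0_compat; auto.
    - exists (- eta0). rewrite Rabs_Ropp, Rabs_pos_eq by lra. rewrite cos_neg, sin_neg.
      assert (cos pb * sin pb <> 0) by (intro E; apply Rmult_integral in E; destruct E; auto).
      repeat split; try lra. nra. }
  destruct Heta as [eta [Hea [Hce Hse]]].
  set (delta := Rmin (e/2) (/k)).
  assert (Hk0 : 0 < / k) by (apply Rinv_0_lt_compat; auto).
  assert (D1 : 0 < delta) by (apply Rmin_glb_lt; lra).
  assert (D2 : delta <= e/2) by apply Rmin_l.
  assert (D3 : delta <= /k) by apply Rmin_r.
  assert (D4 : k * delta <= 1).
  { replace 1 with (k * / k) by (field; lra). apply Rmult_le_compat_l; lra. }
  assert (D5 : 0 < k * delta) by (apply Rmult_lt_0_compat; lra).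
  assert (Hd : cos (k * delta) <> 1).
  { replace (k * delta) with (2 * (k * delta / 2)) by field.
    rewrite cos_2a_sin. assert (0 < sin (k * delta / 2)) by (apply sin_gt_0; lra).
    intro E. nra. }
  assert (Hphi : forall ph, Rabs (ph - pb) < e -> gfun k r ph + sin ph * sg = 0).
  { intros ph Hph.
    apply (three_u _ (cos ph * p) (cos ph * q) (k*u0) (k*delta) Hd).
    - rewrite (Key u0 ph). ring. apply He2; auto.
      replace (u0 - u0) with 0 by ring. rewrite Rabs_R0; lra.
    - rewrite (Key (u0 + delta) ph).
      replace (k * (u0 + delta)) with (k * u0 + k * delta) by ring. ring.
      apply He2; auto. replace (u0 + delta - u0) with delta by ring. rewrite Rabs_pos_eq; lra.
    - rewrite (Key (u0 - delta) ph).
      replace (k * (u0 - delta)) with (k * u0 - k * delta) by ring. ring.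
      apply He2; auto. replace (u0 - delta - u0) with (- delta) by ring.
      rewrite Rabs_Ropp, Rabs_pos_eq; lra. }
  assert (G1 : gfun k r pb + sin pb * sg = 0).
  { apply Hphi. replace (pb - pb) with 0 by ring. rewrite Rabs_R0; lra. }
  assert (G2 : gfun k r (pb + eta) + sin (pb + eta) * sg = 0).
  { apply Hphi. replace (pb + eta - pb) with eta by ring. auto. }
  assert (Hs2 : sin (pb + eta) <> 0).
  { rewrite sin_plus. intro E.
    assert (sin pb * (sin pb * cos eta + cos pb * sin eta) = 0) by (rewrite E; ring).
    assert (0 < sin pb * sin pb) by (apply Rsqr_pos_lt; auto).
    nra. }
  assert (HC12 : cos pb <> cos (pb + eta)).
  { rewrite cos_plus. intro E.
    assert (cos pb * (cos pb - (cos pb * cos eta - sin pb * sin eta)) = 0) by (rewrite <- E; ring).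
    assert (0 < cos pb * cos pb) by (apply Rsqr_pos_lt; auto).
    assert (Hb1 := COS_bound eta). nra. }
  assert (R1 := rho_pos k r pb Hk Hr Hrk).
  assert (R2 := rho_pos k r (pb + eta) Hk Hr Hrk).
  apply (ratio_contra r (/k) (cos pb) (cos (pb + eta))); auto; try lra.
  assert (X1 : sin pb * ((4 * r * cos pb - 3 * / k) / (2 * r * (/ k - r * cos pb)) + sg) = 0).
  { rewrite <- G1. unfold gfun, Rdiv. ring. }
  assert (X2 : sin (pb + eta) * ((4 * r * cos (pb + eta) - 3 * / k) / (2 * r * (/ k - r * cos (pb + eta))) + sg) = 0).
  { rewrite <- G2. unfold gfun, Rdiv. ring. }
  apply Rmult_integral in X1. apply Rmult_integral in X2.
  destruct X1 as [X1|X1]; [contradiction|]. destruct X2 as [X2|X2]; [contradiction|].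
  lra.
Qed.
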